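(* The top cycle is the only robust dominant set rule that satisfies set non-imposition.
   Context: Let $A$ be a finite set of alternatives; preference profiles $R$ consist of strict total orders $\succ_i$ on $A$ for the voters $i$ of a finite non-empty electorate $N\subseteq\{1,2,\dots\}$, and $\mathcal{R}^*(A)$ is the set of all such profiles over all electorates. The majority margin is $g_R(x,y)=|\{i: x\succ_i y\}|-|\{i: y\succ_i x\}|$; $x\succsim_R y$ iff $g_R(x,y)\ge0$, with strict part $\succ_R$. A non-empty $X\subseteq A$ is dominant in $R$ if $x\succ_R y$ for all $x\in X$, $y\in A\setminus X$. The top cycle $\mathrm{TC}(R)$ is the inclusion-smallest dominant set. A social choice correspondence (SCC) is a map $f:\mathcal{R}^*(A)\to 2^A\setminus\{\emptyset\}$. $f$ is a dominant set rule if $f(R)$ is dominant in $R$ for every $R$; it is robust if $f(R')\subseteq f(R)$ for all profiles $R,R'$ such that $f(R)$ is dominant in $R'$. $f$ satisfies set non-imposition if for every non-empty $X\subseteq A$ there is a profile $R$ with $f(R)=X$. *)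

(* Defs.v *)
From HB Require Import structures.
From mathcomp Require Import all_boot all_order all_algebra.
From mathcomp Require Import finmap.
Set Implicit Arguments. Unset Strict Implicit. Unset Printing Implicit Defensive.
Import Order.TTheory GRing.Theory Num.Theory.

Local Open Scope fset_scope.

Section SocialChoice.
Variable A : finType.

(* A strict total order on A, encoded by its (finite) graph:
   r (x, y) = true  means  x is strictly preferred to y. *)
Definition is_strict_total (r : {ffun A * A -> bool}) : bool :=
  [&& [forall x, ~~ r (x, x)],
      [forall x, forall y, forall z, r (x, y) && r (y, z) ==> r (x, z)] &
      [forall x, forall y, (x != y) ==> r (x, y) || r (y, x)]].

Definition sorder := {r : {ffun A * A -> bool} | is_strict_total r}.

Definition prefers (o : sorder) (x y : A) : bool := sval o (x, y).

(* A preference profile: a finite map from voters (natural numbers) to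
   strict total orders; the electorate N is its domain, which must be
   non-empty and contained in {1, 2, ...}. *)
Definition is_profile (R : {fmap nat -> sorder}) : bool :=
  (domf R != fset0) && (0%N \notin domf R).

Definition profile := {R : {fmap nat -> sorder} | is_profile R}.

Definition electorate (R : profile) : {fset nat} := domf (sval R).

Definition margin (R : profile) (x y : A) : int :=
  (#|[set i : domf (sval R) | prefers (sval R i) x y]|%:Z
   - #|[set i : domf (sval R) | prefers (sval R i) y x]|%:Z)%R.

Definition maj_ge (R : profile) (x y : A) : bool := (0 <= margin R x y)%R.

Definition maj_gt (R : profile) (x y : A) : bool :=
  maj_ge R x y && ~~ maj_ge R y x.

Definition dominant (R : profile) (X : {set A}) : bool :=
  (X != set0) && [forall x in X, forall y in ~: X, maj_gt R x y].

(* Top cycle: the inclusion-smallest dominant set, i.e. the intersection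
   of all dominant sets (dominant sets are nested, and A itself is dominant
   whenever A is non-empty). *)
Definition top_cycle (R : profile) : {set A} :=
  \bigcap_(X : {set A} | dominant R X) X.

Definition is_SCC (f : profile -> {set A}) : Prop :=
  forall R, f R != set0.

Definition dominant_set_rule (f : profile -> {set A}) : Prop :=
  forall R, dominant R (f R).

Definition robust (f : profile -> {set A}) : Prop :=
  forall R R' : profile, dominant R' (f R) -> f R' \subset f R.

Definition set_non_imposition (f : profile -> {set A}) : Prop :=
  forall X : {set A}, X != set0 -> exists R : profile, f R = X.

End SocialChoice.

(* Main.v *)
Require Import Defs.
From HB Require Import structures.
From mathcomp Require Import all_boot all_order all_algebra.
From mathcomp Require Import finmap.
From mathcomp Require Import zify.
Set Implicit Arguments. Unset Strict Implicit. Unset Printing Implicit Defensive.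
Import Order.TTheory GRing.Theory Num.Theory.

Section Aux.
Variable A : finType.

Lemma prefers_asym (o : sorder A) x y : prefers o x y -> ~~ prefers o y x.
Proof.
case: o => r Hr; rewrite /prefers /=; move: Hr => /and3P [/forallP irr /forallP tr _].
move=> Hxy; apply/negP => Hyx.
have := tr x; move/forallP/(_ y)/forallP/(_ x); rewrite Hxy Hyx /=.
by move=> H; move: (irr x); rewrite H.
Qed.

Lemma maj_gt_asym (R : profile A) x y : maj_gt R x y -> ~~ maj_gt R y x.
Proof. by rewrite /maj_gt => /andP [H1 H2]; rewrite H1 andbF. Qed.

Lemma dom_nested (R : profile A) X Y : dominant R X -> dominant R Y ->
  X \subset Y \/ Y \subset X.
Proof.
move=> /andP [_ /forallP HX] /andP [_ /forallP HY].
case: (boolP (X \subset Y)) => [h|/subsetPn [x xX xY]]; first by left.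
right; apply/subsetP => y yY; apply/negPn/negP => yX.
have h1 : maj_gt R x y.
  by move: (HX x); rewrite xX /= => /forallP /(_ y); rewrite in_setC yX.
have h2 : maj_gt R y x.
  by move: (HY y); rewrite yY /= => /forallP /(_ x); rewrite in_setC xY.
by move: (maj_gt_asym h1); rewrite h2.
Qed.

Lemma tc_sub (R : profile A) X : dominant R X -> top_cycle R \subset X.
Proof. by move=> H; apply: (bigcap_inf X). Qed.

Lemma tc_min (R : profile A) X : dominant R X ->
  (forall Y, dominant R Y -> X \subset Y) -> top_cycle R = X.
Proof.
move=> HX HY; apply/eqP; rewrite eqEsubset tc_sub //=.
by apply/bigcapsP => Y /HY.
Qed.

Lemma tc_dom (R : profile A) X : dominant R X -> dominant R (top_cycle R).
Proof.
move=> HX.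
pose Y := [arg min_(Z < X | dominant R Z) #|Z|].
have [Z HZ Hmin] : extremum_spec leq (fun Z => dominant R Z) (fun Z => #|Z|) Y.
  exact: arg_minnP.
rewrite (@tc_min R Z) //.
move=> W HW; case: (dom_nested HZ HW) => // sWZ.
have := Hmin W HW => le; have -> // : Z = W.
by apply/eqP; rewrite eq_sym eqEcard sWZ le.
Qed.

End Aux.

Section Aux2.
Variable A : finType.

Lemma unanimous (R : profile A) x y :
  (forall i : domf (sval R), prefers (sval R i) x y) -> maj_gt R x y.
Proof.
move=> H.
have E1 : [set i : domf (sval R) | prefers (sval R i) x y] = setT.
  by apply/setP => i; rewrite !inE H.
have E2 : [set i : domf (sval R) | prefers (sval R i) y x] = set0.
  by apply/setP => i; rewrite !inE; apply/negbTE/prefers_asym.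
have pos : (0 < #|[set: domf (sval R)]|)%N.
  case: R H {E1 E2} => r /= /andP [/fset0Pn [k kr] _] _.
  by apply/card_gt0P; exists (FSetSub kr); rewrite inE.
rewrite /maj_gt /maj_ge /margin E1 E2 cards0 subr0 sub0r.
idtac.
move: pos; set n := #|_| => pos; apply/andP; split => //; rewrite oppr_ge0 -ltNge ltz_nat; exact: pos.
Qed.

End Aux2.

Section Aux3.
Variable A : finType.

Lemma mk_order_proof (rk : A -> nat) (H : injective rk) :
  is_strict_total [ffun p : A * A => (rk p.1 < rk p.2)%N].
Proof.
apply/and3P; split.
- by apply/forallP => x; rewrite ffunE ltnn.
- apply/forallP => x; apply/forallP => y; apply/forallP => z; apply/implyP.
  rewrite !ffunE /= => /andP [h1 h2]; exact: ltn_trans h1 h2.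
- apply/forallP => x; apply/forallP => y; apply/implyP => nxy.
  rewrite !ffunE /=; case: (ltngtP (rk x) (rk y)) => // /H exy.
  by rewrite exy eqxx in nxy.
Qed.

Definition mk_order (rk : A -> nat) (H : injective rk) : sorder A :=
  exist (fun r => is_strict_total r) _ (mk_order_proof H).

Lemma mk_orderE rk (H : injective rk) x y : prefers (mk_order H) x y = (rk x < rk y)%N.
Proof. by rewrite /prefers /= ffunE. Qed.

Local Open Scope fset_scope.

Definition map2 (o1 o2 : sorder A) : {fmap nat -> sorder A} :=
  [fmap i : [fset 1%N; 2%N] => if val i == 1%N then o1 else o2].

Lemma map2_proof o1 o2 : is_profile (map2 o1 o2).
Proof.
apply/andP; split.
- by apply/fset0Pn; exists 1%N; rewrite /= in_fset2 eqxx.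
- by rewrite /= in_fset2.
Qed.

Definition prof2 o1 o2 : profile A := exist (fun R => is_profile R) _ (map2_proof o1 o2).

Lemma prof2E o1 o2 (i : domf (sval (prof2 o1 o2))) :
  sval (prof2 o1 o2) i = if val i == 1%N then o1 else o2.
Proof. by rewrite /= ffunE. Qed.

Lemma card_b o1 o2 (b : bool) :
  #|[set i : domf (sval (prof2 o1 o2)) | if val i == 1%N then b else ~~ b]| = 1%N.
Proof.
have k1 : (1%N \in domf (sval (prof2 o1 o2))) by rewrite /= in_fset2 eqxx.
have k2 : (2%N \in domf (sval (prof2 o1 o2))) by rewrite /= in_fset2 eqxx orbT.
rewrite (_ : [set i | _] = [set (if b then FSetSub k1 else FSetSub k2)]) ?cards1 //.
apply/setP => i; rewrite !inE.
have : val i \in [fset 1%N; 2%N] by exact: (valP i).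
case/fset2P => vi.
- rewrite vi eqxx; case: b => /=; apply/esym.
  + by apply/eqP/val_inj.
  + by apply/negbTE; apply/negP => /eqP /(congr1 val); rewrite vi.
- rewrite vi /=; case: b => /=; apply/esym.
  + by apply/negbTE; apply/negP => /eqP /(congr1 val); rewrite vi.
  + by apply/eqP/val_inj.
Qed.

Lemma tie o1 o2 x y : x != y ->
  prefers o2 x y = prefers o1 y x ->
  margin (prof2 o1 o2) x y = 0%R.
Proof.
move=> nxy h2.
have t1 : prefers o1 y x = ~~ prefers o1 x y.
  case: (o1) => r Hr; rewrite /prefers /=; move: (Hr) => /and3P [_ _ /forallP /(_ x) /forallP /(_ y)].
  rewrite nxy /= => hor.
  case hxy: (r (x, y)); last by move: hor; rewrite hxy.
  have := prefers_asym (o := exist _ r Hr) (x := x) (y := y).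
  by rewrite /prefers /= hxy => /(_ isT) /negbTE.
have h2' : prefers o2 y x = ~~ prefers o1 y x.
  have t2 : prefers o2 y x = ~~ prefers o2 x y.
    case: (o2) => r Hr; rewrite /prefers /=; move: (Hr) => /and3P [_ _ /forallP /(_ x) /forallP /(_ y)].
    rewrite nxy /= => hor.
    case hxy: (r (x, y)); last by move: hor; rewrite hxy.
    have := prefers_asym (o := exist _ r Hr) (x := x) (y := y).
    by rewrite /prefers /= hxy => /(_ isT) /negbTE.
  by rewrite t2 h2.
rewrite /margin.
rewrite (_ : [set i | prefers _ x y] = [set i : domf (sval (prof2 o1 o2)) | if val i == 1%N then prefers o1 x y else ~~ prefers o1 x y]); last first.
  apply/setP => i; rewrite !inE prof2E; case: ifP => //; rewrite h2 t1 //.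
rewrite (_ : [set i | prefers _ y x] = [set i : domf (sval (prof2 o1 o2)) | if val i == 1%N then prefers o1 y x else ~~ prefers o1 y x]); last first.
  apply/setP => i; rewrite !inE prof2E; case: ifP => //; rewrite h2' //.
by rewrite !card_b subrr.
Qed.

End Aux3.

Section Aux4.
Variable A : finType.
Variable X : {set A}.

Let n := #|A|.
Let idx (x : A) : nat := enum_rank x.
Lemma idx_lt x : (idx x < n)%N. Proof. exact: ltn_ord. Qed.
Lemma idx_inj : injective idx.
Proof. by move=> x y /ord_inj /enum_rank_inj. Qed.

Definition rk1 x := if x \in X then idx x else (n.+1 + idx x)%N.
Definition rk2 x := if x \in X then (n - idx x)%N else (n.+1 + idx x)%N.

Lemma rk1_inj : injective rk1.
Proof.
move=> x y; rewrite /rk1 => h; apply: idx_inj.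
have := idx_lt x; have := idx_lt y.
by case: ifP h => _; case: ifP => _ h; lia.
Qed.

Lemma rk2_inj : injective rk2.
Proof.
move=> x y; rewrite /rk2 => h; apply: idx_inj.
have := idx_lt x; have := idx_lt y.
by case: ifP h => _; case: ifP => _ h; lia.
Qed.

Definition profX : profile A := prof2 (mk_order rk1_inj) (mk_order rk2_inj).

Lemma profX_gt x y : x \in X -> y \notin X -> maj_gt profX x y.
Proof.
move=> xX yX; apply: unanimous => i; rewrite prof2E.
have := idx_lt x; have := idx_lt y.
case: ifP => _; rewrite mk_orderE /rk1 /rk2 xX (negbTE yX) => ??; lia.
Qed.

Lemma profX_tie x y : x \in X -> y \in X -> x != y -> margin profX x y = 0%R.
Proof.
move=> xX yX nxy; apply: tie => //.
rewrite !mk_orderE /rk1 /rk2 xX yX.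
have := idx_lt x; have := idx_lt y => ??.
by apply/idP/idP => h; lia.
Qed.

Lemma profX_tc : X != set0 -> top_cycle profX = X.
Proof.
move=> X0.
have dX : dominant profX X.
  rewrite /dominant X0 /=; apply/forallP => x; apply/implyP => xX.
  apply/forallP => y; apply/implyP; rewrite inE => yX; exact: profX_gt.
apply: tc_min => // Y dY.
case: (dom_nested dX dY) => // sYX.
apply/subsetP => x xX; apply/negPn/negP => xY.
move: (dY) => /andP [/set0Pn [y yY] /forallP /(_ y)].
rewrite yY /= => /forallP /(_ x); rewrite inE xY /=.
have yX : y \in X by apply: (subsetP sYX).
have nxy : x != y by apply/eqP => exy; rewrite exy yY in xY.
by rewrite /maj_gt /maj_ge profX_tie // ?profX_tie // eq_sym.
Qed.

End Aux4.

Theorem lemma1 (A : finType) (f : profile A -> {set A}) :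
  is_SCC f ->
  ((dominant_set_rule f /\ robust f /\ set_non_imposition f) <->
   (forall R : profile A, f R = top_cycle R)).
Proof.
move=> scc; split.
- move=> [dr [rob sni]] R.
  have dT := tc_dom (dr R).
  have T0 : top_cycle R != set0 by case/andP: dT.
  have [R' eR'] := sni _ T0.
  apply/eqP; rewrite eqEsubset tc_sub ?dr // andbT.
  rewrite -eR'; apply: rob; rewrite eR' //.
- move=> Hf.
  have domT : forall R : profile A, dominant R (top_cycle R).
    move=> R; have := scc R; rewrite Hf => /set0Pn [a _].
    apply: (@tc_dom _ R setT); rewrite /dominant; apply/andP; split.
      by apply/set0Pn; exists a; rewrite inE.
    by apply/forallP => x; apply/implyP => _; apply/forallP => y; rewrite !inE.
  split; [|split].
  + by move=> R; rewrite Hf.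
  + move=> R R'; rewrite !Hf => H; exact: tc_sub.
  + move=> X X0; exists (profX X); rewrite Hf; exact: profX_tc.
Qed.
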